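(* Let $N\ge 2$ be an integer and $\kappa,m>0$. For every fixed $k_1\in\mathbb{Z}\cap(0,N)$, $$\sum_{\substack{k_2,k_3,k_4\in\mathbb{Z}\cap(0,N)\\ k_1-k_2+k_3+k_4\equiv 0\ (\mathrm{mod}\ N)}}\big|A^{(2)}_{1,2,3,4}\big|^2\le C\,N^2\log N,$$ with $C>0$ depending only on $\kappa,m$.
   Context: For an integer $N\ge 2$ and constants $\kappa,m>0$, define for $k\in\mathbb{Z}$ the frequency $\omega_k=2\sqrt{\kappa/m}\,\big|\sin(\pi k/N)\big|$ and the $2N$-periodic sign function $\iota(x)=\operatorname{sgn}\sin(\pi x/N)$. For integers $k_1,k_2,k_3,k_4$ set $$T_{1,-2,3,4}=-\frac{3}{4\kappa^2}\,\iota(-k_2+k_3+k_4)\,\iota(-k_2)\,\iota(k_3)\,\iota(k_4)\prod_{i=1}^4\sqrt{\omega_{k_i}},\qquad A^{(2)}_{1,2,3,4}=-\frac{T_{1,-2,3,4}}{\omega_{k_1}-\omega_{k_2}+\omega_{k_3}+\omega_{k_4}}.$$ On the summation range (all $k_i\in\mathbb{Z}\cap(0,N)$, $k_1-k_2+k_3+k_4\equiv 0$ mod $N$) the denominator does not vanish. *)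

(* Defs.v *)
From Stdlib Require Import Reals Lra Lia ZArith.
Open Scope R_scope.

Definition Rsgn (x : R) : R :=
  if Rlt_dec 0 x then 1 else if Rlt_dec x 0 then -1 else 0.

Definition omega (kappa m : R) (N : nat) (k : Z) : R :=
  2 * sqrt (kappa / m) * Rabs (sin (PI * IZR k / INR N)).

Definition iota (N : nat) (x : Z) : R := Rsgn (sin (PI * IZR x / INR N)).

Definition T_coef (kappa m : R) (N : nat) (k1 k2 k3 k4 : Z) : R :=
  - (3 / (4 * kappa ^ 2)) *
    iota N (- k2 + k3 + k4) * iota N (- k2) * iota N k3 * iota N k4 *
    (sqrt (omega kappa m N k1) * sqrt (omega kappa m N k2) *
     sqrt (omega kappa m N k3) * sqrt (omega kappa m N k4)).

Definition A2 (kappa m : R) (N : nat) (k1 k2 k3 k4 : Z) : R :=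
  - T_coef kappa m N k1 k2 k3 k4 /
    (omega kappa m N k1 - omega kappa m N k2 + omega kappa m N k3 + omega kappa m N k4).

(* Sum over k2,k3,k4 in {1,...,N-1} with k1 - k2 + k3 + k4 = 0 mod N
   of |A2|^2.  sum_f_R0 f (N-2) sums indices 0..N-2, shifted by 1. *)
Definition resonance_sum (kappa m : R) (N : nat) (k1 : Z) : R :=
  sum_f_R0 (fun i2 =>
    sum_f_R0 (fun i3 =>
      sum_f_R0 (fun i4 =>
        let k2 := Z.of_nat (S i2) in
        let k3 := Z.of_nat (S i3) in
        let k4 := Z.of_nat (S i4) in
        if Z.eqb ((k1 - k2 + k3 + k4) mod Z.of_nat N)%Z 0%Z
        then (Rabs (A2 kappa m N k1 k2 k3 k4)) ^ 2
        else 0) (N - 2)) (N - 2)) (N - 2).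

(* Main.v *)
Require Import Defs.
From Stdlib Require Import Reals Lra Lia Psatz ZArith.
Open Scope R_scope.

Lemma abs_sin_add a b : Rabs (sin (a+b)) <= Rabs (sin a) * Rabs (cos b) + Rabs (cos a) * Rabs (sin b).
Proof. rewrite sin_plus. rewrite <- !Rabs_mult. apply Rabs_triang. Qed.

Lemma one_minus_abscos x : (sin x)^2 / 2 <= 1 - Rabs (cos x).
Proof.
  pose proof (sin2_cos2 x) as H. unfold Rsqr in H.
  pose proof (pow2_abs (cos x)) as H2.
  pose proof (COS_bound x) as [H3 H4].
  assert (Rabs (cos x) <= 1) by (apply Rabs_le; lra).
  assert (0 <= Rabs (cos x)) by apply Rabs_pos.
  nra.
Qed.

Lemma pair_bound x y z : 0 <= sin x -> 0 <= sin y -> 0 <= sin z ->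
  Rabs (sin (x+y+z)) <= sin x + sin y * Rabs (cos z) + sin z * Rabs (cos y).
Proof.
  intros hx hy hz.
  replace (x+y+z) with (x + (y+z)) by ring.
  pose proof (abs_sin_add x (y+z)) as H1.
  pose proof (abs_sin_add y z) as H2.
  assert (Rabs (cos (y+z)) <= 1) by (apply Rabs_le; apply COS_bound).
  assert (Rabs (cos x) <= 1) by (apply Rabs_le; apply COS_bound).
  rewrite (Rabs_right (sin x)) in H1 by lra.
  rewrite (Rabs_right (sin y)), (Rabs_right (sin z)) in H2 by lra.
  pose proof (Rabs_pos (sin (y+z))). pose proof (Rabs_pos (cos (y+z))).
  pose proof (Rabs_pos (cos x)). pose proof (Rabs_pos (cos z)). pose proof (Rabs_pos (cos y)).
  nra.
Qed.

Lemma pair_lower x y z : 0 <= sin x -> 0 <= sin y -> 0 <= sin z ->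
  (sin y * (sin z)^2 + sin z * (sin y)^2)/2 <= sin x + sin y + sin z - Rabs (sin (x+y+z)).
Proof.
  intros hx hy hz. pose proof (pair_bound x y z hx hy hz).
  pose proof (one_minus_abscos y). pose proof (one_minus_abscos z). nra.
Qed.

Lemma trig_main x y z : 0 <= sin x -> 0 <= sin y -> 0 <= sin z ->
  (sin x + sin y) * (sin y + sin z) * (sin x + sin z) <=
  8 * (sin x + sin y + sin z - Rabs (sin (x+y+z))).
Proof.
  intros hx hy hz.
  pose proof (pair_lower x y z hx hy hz) as E1.
  pose proof (pair_lower y x z hy hx hz) as E2.
  pose proof (pair_lower z x y hz hx hy) as E3.
  replace (y+x+z) with (x+y+z) in E2 by ring.
  replace (z+x+y) with (x+y+z) in E3 by ring.
  set (a := sin x) in *. set (b := sin y) in *. set (c := sin z) in *.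
  set (S := Rabs (sin (x+y+z))) in *.
  assert (0 <= a*(b-c)^2) by (apply Rmult_le_pos; [lra| apply pow2_ge_0]).
  assert (0 <= b*(a-c)^2) by (apply Rmult_le_pos; [lra| apply pow2_ge_0]).
  assert (0 <= c*(a-b)^2) by (apply Rmult_le_pos; [lra| apply pow2_ge_0]).
  nra.
Qed.

Lemma Rsgn_sq x : (Rsgn x)^2 <= 1.
Proof. unfold Rsgn. destruct (Rlt_dec 0 x); [lra|]. destruct (Rlt_dec x 0); lra. Qed.

Lemma omega_nonneg kappa m N k : 0 <= omega kappa m N k.
Proof. unfold omega. pose proof (sqrt_pos (kappa/m)). pose proof (Rabs_pos (sin (PI * IZR k / INR N))). nra. Qed.

Lemma A2_sq_le kappa m N k1 k2 k3 k4 :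
  let D := omega kappa m N k1 - omega kappa m N k2 + omega kappa m N k3 + omega kappa m N k4 in
  D <> 0 ->
  (Rabs (A2 kappa m N k1 k2 k3 k4))^2 <=
  (3 / (4 * kappa ^ 2))^2 * (omega kappa m N k1 * omega kappa m N k2 * omega kappa m N k3 * omega kappa m N k4) / D^2.
Proof.
  intros D HD. rewrite pow2_abs. unfold A2. fold D.
  unfold T_coef.
  set (c := 3 / (4 * kappa ^ 2)).
  set (w1 := omega kappa m N k1). set (w2 := omega kappa m N k2).
  set (w3 := omega kappa m N k3). set (w4 := omega kappa m N k4).
  assert (h1 : 0 <= w1) by apply omega_nonneg. assert (h2 : 0 <= w2) by apply omega_nonneg.
  assert (h3 : 0 <= w3) by apply omega_nonneg. assert (h4 : 0 <= w4) by apply omega_nonneg.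
  pose proof (sqrt_sqrt _ h1). pose proof (sqrt_sqrt _ h2).
  pose proof (sqrt_sqrt _ h3). pose proof (sqrt_sqrt _ h4).
  unfold iota.
  set (j1 := Rsgn (sin (PI * IZR (- k2 + k3 + k4) / INR N))).
  set (j2 := Rsgn (sin (PI * IZR (- k2) / INR N))).
  set (j3 := Rsgn (sin (PI * IZR k3 / INR N))).
  set (j4 := Rsgn (sin (PI * IZR k4 / INR N))).
  assert (e1 : j1^2 <= 1) by apply Rsgn_sq. assert (e2 : j2^2 <= 1) by apply Rsgn_sq.
  assert (e3 : j3^2 <= 1) by apply Rsgn_sq. assert (e4 : j4^2 <= 1) by apply Rsgn_sq.
  assert (HD2 : 0 < D^2) by (pose proof (Rsqr_pos_lt D HD); unfold Rsqr in *; nra).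
  replace ((- (- c * j1 * j2 * j3 * j4 * (sqrt w1 * sqrt w2 * sqrt w3 * sqrt w4)) / D) ^ 2)
    with (c^2 * (j1^2 * j2^2 * j3^2 * j4^2) * ((sqrt w1 * sqrt w1)*(sqrt w2 * sqrt w2)*(sqrt w3 * sqrt w3)*(sqrt w4 * sqrt w4)) / D^2) by (field; auto).
  rewrite H, H0, H1, H2. clearbody w1 w2 w3 w4 j1 j2 j3 j4 c.
  unfold Rdiv. apply Rmult_le_compat_r. { left. apply Rinv_0_lt_compat. auto. }
  assert (0 <= w1*w2*w3*w4) by (repeat apply Rmult_le_pos; auto).
  assert (0 <= j1^2 * j2^2 * j3^2 * j4^2).
  { pose proof (pow2_ge_0 j1); pose proof (pow2_ge_0 j2); pose proof (pow2_ge_0 j3); pose proof (pow2_ge_0 j4).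
    pose proof (Rmult_le_pos _ _ H4 H5). pose proof (Rmult_le_pos _ _ H8 H6). exact (Rmult_le_pos _ _ H9 H7). }
  assert (j1^2 * j2^2 * j3^2 * j4^2 <= 1).
  { assert (0<=j1^2) by apply pow2_ge_0. assert (0<=j2^2) by apply pow2_ge_0.
    assert (0<=j3^2) by apply pow2_ge_0. assert (0<=j4^2) by apply pow2_ge_0.
    assert (j1^2*j2^2 <= 1) by nra. assert (j1^2*j2^2*j3^2 <= 1) by nra.
    assert (0 <= j1^2*j2^2) by nra. assert (0 <= j1^2*j2^2*j3^2) by nra. nra. }
  pose proof (pow2_ge_0 c) as Hc.
  set (J := j1 ^ 2 * j2 ^ 2 * j3 ^ 2 * j4 ^ 2) in *. set (W := w1 * w2 * w3 * w4) in *.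
  assert (0 <= c^2 * W) by (apply Rmult_le_pos; auto).
  replace (c ^ 2 * J * W) with ((c^2 * W) * J) by ring.
  rewrite <- (Rmult_1_r (c^2 * W)) at 2. apply Rmult_le_compat_l; auto.
Qed.
Lemma core a b u v D : 0<a -> 0<u -> 0<v -> 0<=b -> D = a - b + u + v ->
  (a+u)*(u+v)*(a+v) <= 8*D -> a*b*u*v/D^2 <= 64/(u+v)^2.
Proof.
  intros ha hu hv hb hD hP.
  assert (hP0 : 0 < (a+u)*(u+v)*(a+v)) by (repeat apply Rmult_lt_0_compat; lra).
  assert (hD0 : 0 < D) by lra.
  assert (hb2 : b <= a+u+v) by lra.
  assert (h1 : a*b*u*v <= (a+u)*(a+v)*(u*v)).
  { assert (a*b <= a*(a+u+v)) by (apply Rmult_le_compat_l; lra).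
    assert (0 < u*v) by (apply Rmult_lt_0_compat; lra). nra. }
  assert (h2 : (a+u)*(a+v)*(u*v) <= ((a+u)*(a+v))^2).
  { assert (0 < (a+u)*(a+v)) by (apply Rmult_lt_0_compat; lra).
    assert (u*v <= (a+u)*(a+v)) by nra. nra. }
  assert (h3 : ((a+u)*(u+v)*(a+v))^2 <= (8*D)^2).
  { apply pow_incr. lra. }
  assert (h4 : a*b*u*v*(u+v)^2 <= 64 * D^2).
  { assert (0 < (u+v)^2) by (apply pow_lt; lra).
    assert (a*b*u*v*(u+v)^2 <= ((a+u)*(a+v))^2 * (u+v)^2) by (apply Rmult_le_compat_r; lra).
    replace (((a+u)*(a+v))^2 * (u+v)^2) with (((a+u)*(u+v)*(a+v))^2) in H0 by ring.
    lra. }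
  assert (0 < D^2) by (apply pow_lt; lra).
  assert (0 < (u+v)^2) by (apply pow_lt; lra).
  apply (Rmult_le_reg_r (D^2 * (u+v)^2)). { apply Rmult_lt_0_compat; lra. }
  replace (a*b*u*v/D^2 * (D^2*(u+v)^2)) with (a*b*u*v*(u+v)^2) by (field; lra).
  replace (64/(u+v)^2 * (D^2*(u+v)^2)) with (64*D^2) by (field; lra).
  exact h4.
Qed.

Definition th (N : nat) (k : Z) : R := PI * IZR k / INR N.

Lemma INR_pos2 N : (2 <= N)%nat -> 0 < INR N.
Proof. intros. apply lt_0_INR. lia. Qed.

Lemma sin_th_pos N k : (2 <= N)%nat -> (1 <= k)%Z -> (k <= Z.of_nat N - 1)%Z -> 0 < sin (th N k).
Proof.
  intros HN h1 h2. unfold th. pose proof (INR_pos2 N HN). pose proof PI_RGT_0.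
  rewrite INR_IZR_INZ in *.
  assert (1 <= IZR k) by (apply IZR_le; lia).
  assert (IZR k + 1 <= IZR (Z.of_nat N)) by (rewrite <- plus_IZR; apply IZR_le; lia).
  apply sin_gt_0.
  - apply Rdiv_lt_0_compat; nra.
  - apply (Rmult_lt_reg_r (IZR (Z.of_nat N))); auto.
    unfold Rdiv. rewrite Rmult_assoc, Rinv_l by lra. nra.
Qed.

Lemma sin_th2 N k1 k2 k3 k4 : (2 <= N)%nat ->
  (1 <= k1 <= Z.of_nat N - 1)%Z -> (1 <= k2 <= Z.of_nat N - 1)%Z ->
  (1 <= k3 <= Z.of_nat N - 1)%Z -> (1 <= k4 <= Z.of_nat N - 1)%Z ->
  ((k1 - k2 + k3 + k4) mod Z.of_nat N = 0)%Z ->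
  Rabs (sin (th N k2)) = Rabs (sin (th N k1 + th N k3 + th N k4)).
Proof.
  intros HN h1 h2 h3 h4 hm.
  assert (HNz : (Z.of_nat N <> 0)%Z) by lia.
  pose proof (Z_div_mod_eq_full (k1 - k2 + k3 + k4) (Z.of_nat N)) as E.
  rewrite hm in E. set (j := ((k1 - k2 + k3 + k4) / Z.of_nat N)%Z) in *.
  assert (hj : (0 <= j <= 2)%Z) by nia.
  assert (Hth : th N k1 + th N k3 + th N k4 = th N k2 + IZR j * PI).
  { unfold th. pose proof (INR_pos2 N HN). rewrite INR_IZR_INZ in *.
    assert (IZR k1 + IZR k3 + IZR k4 = IZR k2 + IZR j * IZR (Z.of_nat N)).
    { rewrite <- mult_IZR, <- !plus_IZR. f_equal. lia. }
    apply (Rmult_eq_reg_r (IZR (Z.of_nat N))); [|lra]. field_simplify; try lra. replace (PI * IZR k1 + PI * IZR k3 + PI * IZR k4) with (PI * (IZR k1 + IZR k3 + IZR k4)) by ring. rewrite H0. ring. }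
  rewrite Hth.
  assert (j = 0%Z \/ j = 1%Z \/ j = 2%Z) as [-> | [-> | ->]] by lia.
  - f_equal. f_equal. simpl. ring.
  - simpl. rewrite Rmult_1_l, neg_sin, Rabs_Ropp. reflexivity.
  - simpl. replace (th N k2 + 2 * PI) with ((th N k2 + PI) + PI) by ring.
    rewrite !neg_sin, Ropp_involutive. reflexivity.
Qed.

Lemma term_bound kappa m N k1 k2 k3 k4 : 0 < kappa -> 0 < m -> (2 <= N)%nat ->
  (1 <= k1 <= Z.of_nat N - 1)%Z -> (1 <= k2 <= Z.of_nat N - 1)%Z ->
  (1 <= k3 <= Z.of_nat N - 1)%Z -> (1 <= k4 <= Z.of_nat N - 1)%Z ->
  ((k1 - k2 + k3 + k4) mod Z.of_nat N = 0)%Z ->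
  (Rabs (A2 kappa m N k1 k2 k3 k4))^2 <=
  (3/(4*kappa^2))^2 * (2*sqrt(kappa/m))^2 * 64 / (sin (th N k3) + sin (th N k4))^2.
Proof.
  intros hk hm HN h1 h2 h3 h4 hmod.
  set (sg := 2*sqrt(kappa/m)).
  assert (hsg : 0 < sg) by (unfold sg; pose proof (sqrt_lt_R0 (kappa/m) (Rdiv_lt_0_compat _ _ hk hm)); lra).
  assert (Eo : forall k, omega kappa m N k = sg * Rabs (sin (th N k))) by reflexivity.
  pose proof (sin_th_pos N k1 HN (proj1 h1) (proj2 h1)) as p1.
  pose proof (sin_th_pos N k3 HN (proj1 h3) (proj2 h3)) as p3.
  pose proof (sin_th_pos N k4 HN (proj1 h4) (proj2 h4)) as p4.
  pose proof (sin_th2 N k1 k2 k3 k4 HN h1 h2 h3 h4 hmod) as e2.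
  pose proof (A2_sq_le kappa m N k1 k2 k3 k4) as HA. cbv zeta in HA.
  rewrite !Eo, e2 in HA.
  rewrite (Rabs_right (sin (th N k1))), (Rabs_right (sin (th N k3))), (Rabs_right (sin (th N k4))) in HA by lra.
  set (a := sin (th N k1)) in *. set (u := sin (th N k3)) in *. set (v := sin (th N k4)) in *.
  set (b := Rabs (sin (th N k1 + th N k3 + th N k4))) in *.
  pose proof (trig_main (th N k1) (th N k3) (th N k4)) as TM.
  fold a u v b in TM. specialize (TM ltac:(lra) ltac:(lra) ltac:(lra)).
  replace (a+u+v-b) with (a-b+u+v) in TM by ring.
  assert (hb : 0 <= b) by apply Rabs_pos.
  assert (hP0 : 0 < (a+u)*(u+v)*(a+v)) by (repeat apply Rmult_lt_0_compat; lra).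
  assert (hDp : 0 < a - b + u + v) by lra.
  assert (HD : sg * a - sg * b + sg * u + sg * v <> 0) by nra.
  specialize (HA HD).
  pose proof (core a b u v (a - b + u + v) ltac:(lra) ltac:(lra) ltac:(lra) hb eq_refl TM) as HC.
  eapply Rle_trans; [exact HA|].
  replace ((3 / (4 * kappa ^ 2)) ^ 2 * (sg * a * (sg * b) * (sg * u) * (sg * v)) / (sg * a - sg * b + sg * u + sg * v) ^ 2)
    with ((3 / (4 * kappa ^ 2)) ^ 2 * sg^2 * (a*b*u*v/(a - b + u + v)^2)) by (field; lra).
  replace ((3 / (4 * kappa ^ 2)) ^ 2 * sg ^ 2 * 64 / (u + v) ^ 2)
    with ((3 / (4 * kappa ^ 2)) ^ 2 * sg^2 * (64 / (u + v) ^ 2)) by (field; lra).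
  apply Rmult_le_compat_l; [|exact HC].
  apply Rmult_le_pos; apply pow2_ge_0.
Qed.

Lemma telescope (f G : nat -> R) n :
  (forall i, (i <= n)%nat -> f i <= G (S i) - G i) -> sum_f_R0 f n <= G (S n) - G O.
Proof.
  induction n as [|n IH]; intros H.
  - simpl. apply H. lia.
  - rewrite tech5. pose proof (H (S n) (le_n _)).
    assert (sum_f_R0 f n <= G (S n) - G O) by (apply IH; intros; apply H; lia). lra.
Qed.

Lemma sum_swap (f : nat -> nat -> R) n m :
  sum_f_R0 (fun i => sum_f_R0 (fun j => f i j) m) n =
  sum_f_R0 (fun j => sum_f_R0 (fun i => f i j) n) m.
Proof.
  induction n as [|n IH].
  - simpl. reflexivity.
  - rewrite tech5, IH. rewrite <- sum_plus. apply sum_eq. intros. rewrite tech5. reflexivity.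
Qed.

Lemma sum_unique (P : nat -> bool) (c : R) n : 0 <= c ->
  (forall i j, (i <= n)%nat -> (j <= n)%nat -> P i = true -> P j = true -> i = j) ->
  sum_f_R0 (fun i => if P i then c else 0) n <= c.
Proof.
  intros hc. induction n as [|n IH]; intros H.
  - simpl. destruct (P 0%nat); lra.
  - rewrite tech5. destruct (P (S n)) eqn:E.
    + assert (sum_f_R0 (fun i => if P i then c else 0) n = 0).
      { apply sum_eq_R0. intros i hi. destruct (P i) eqn:E2; auto.
        exfalso. assert (i = S n) by (apply H; auto). lia. }
      lra.
    + rewrite Rplus_0_r. apply IH. intros. apply H; auto.
Qed.

Lemma ln_key x : 1 <= x -> 1/x <= (ln (x+1) - 1/(x+1)) - (ln x - 1/x).
Proof.
  intros hx.
  assert (1/(x+1) <= ln (x+1) - ln x).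
  { destruct (Rle_lt_dec (1/(x+1)) (ln (x+1) - ln x)) as [h|h]; auto.
    exfalso. assert (ln (x+1) - 1/(x+1) < ln x) by lra.
    apply exp_increasing in H. rewrite exp_ln in H by lra.
    unfold Rminus in H. rewrite exp_plus, exp_ln in H by lra.
    pose proof (exp_ineq1_le (- (1/(x+1)))).
    assert ((x+1) * (1 + - (1/(x+1))) = x) by (field; lra).
    assert ((x+1) * (1 + - (1/(x+1))) <= (x+1) * exp (- (1/(x+1)))) by (apply Rmult_le_compat_l; lra).
    lra. }
  assert (1/x - 1/(x+1) >= 0).
  { unfold Rdiv. rewrite !Rmult_1_l. assert (/ (x+1) <= / x) by (apply Rinv_le_contravar; lra). lra. }
  lra.
Qed.

Lemma tele_sq y : 0 < y -> 1/(y+1)^2 <= 1/y - 1/(y+1).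
Proof.
  intros hy. replace (1/y - 1/(y+1)) with (1/(y*(y+1))) by (field; lra).
  unfold Rdiv. rewrite !Rmult_1_l. apply Rinv_le_contravar.
  - apply Rmult_lt_0_compat; lra.
  - nra.
Qed.

Lemma inner_fwd p n : 1 <= p -> sum_f_R0 (fun i => 1/(p + (INR i + 1))^2) n <= 1/p.
Proof.
  intros hp. eapply Rle_trans.
  - apply (telescope _ (fun i => - (1/(p + INR i))) n).
    intros i _. rewrite S_INR. pose proof (pos_INR i).
    pose proof (tele_sq (p + INR i) ltac:(lra)).
    replace (p + (INR i + 1)) with (p + INR i + 1) by ring. lra.
  - cbv beta. rewrite S_INR. simpl INR at 2. pose proof (pos_INR n).
    assert (0 <= 1/(p + (INR n + 1))) by (apply Rlt_le, Rdiv_lt_0_compat; lra).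
    rewrite Rplus_0_r. lra.
Qed.

Lemma inner_bwd p N : (2 <= N)%nat -> 1 <= p ->
  sum_f_R0 (fun i => 1/(p + (INR N - INR i - 1))^2) (N-2) <= 1/p.
Proof.
  intros HN hp. eapply Rle_trans.
  - apply (telescope _ (fun i => 1/(p + INR N - 1 - INR i)) (N-2)).
    intros i hi. rewrite S_INR.
    assert (INR i <= INR N - 2).
    { replace 2 with (INR 2) by (simpl; ring). rewrite <- minus_INR by lia. apply le_INR. lia. }
    pose proof (tele_sq (p + INR N - 2 - INR i) ltac:(lra)).
    replace (p + (INR N - INR i - 1)) with (p + INR N - 2 - INR i + 1) by ring.
    replace (p + INR N - 1 - (INR i + 1)) with (p + INR N - 2 - INR i) by ring.
    replace (p + INR N - 1 - INR i) with (p + INR N - 2 - INR i + 1) by ring. lra.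
  - replace (S (N-2)) with (N-1)%nat by lia. rewrite minus_INR by lia. simpl.
    assert (1 <= INR N) by (apply (le_INR 1); lia).
    replace (p + INR N - 1 - (INR N - 1)) with p by ring.
    assert (0 <= 1/(p + INR N - 1 - 0)) by (apply Rlt_le, Rdiv_lt_0_compat; lra). lra.
Qed.

Definition L (x : R) := ln x - 1/x.

Lemma outer_fwd N : (2 <= N)%nat -> sum_f_R0 (fun i => 1/(INR i + 1)) (N-2) <= 1 + ln (INR N).
Proof.
  intros HN. eapply Rle_trans.
  - apply (telescope _ (fun i => L (INR i + 1)) (N-2)).
    intros i _. rewrite S_INR. unfold L. pose proof (pos_INR i). apply ln_key. lra.
  - replace (S (N-2)) with (N-1)%nat by lia. rewrite minus_INR by lia. simpl. unfold L.
    assert (2 <= INR N) by (apply (le_INR 2); lia).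
    replace (INR N - 1 + 1) with (INR N) by ring. replace (0+1) with 1 by ring. rewrite ln_1.
    assert (0 <= 1/INR N) by (apply Rlt_le, Rdiv_lt_0_compat; lra). lra.
Qed.

Lemma outer_bwd N : (2 <= N)%nat -> sum_f_R0 (fun i => 1/(INR N - INR i - 1)) (N-2) <= 1 + ln (INR N).
Proof.
  intros HN. eapply Rle_trans.
  - apply (telescope _ (fun i => - L (INR N - INR i)) (N-2)).
    intros i hi. rewrite S_INR. unfold L.
    assert (INR i <= INR N - 2).
    { replace 2 with (INR 2) by (simpl; ring). rewrite <- minus_INR by lia. apply le_INR. lia. }
    pose proof (ln_key (INR N - INR i - 1) ltac:(lra)).
    replace (INR N - INR i - 1 + 1) with (INR N - INR i) in H0 by ring.
    replace (INR N - (INR i + 1)) with (INR N - INR i - 1) by ring. lra.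
  - replace (S (N-2)) with (N-1)%nat by lia. rewrite minus_INR by lia. simpl. unfold L.
    assert (2 <= INR N) by (apply (le_INR 2); lia).
    replace (INR N - (INR N - 1)) with 1 by ring. rewrite Rminus_0_r. rewrite ln_1.
    assert (0 <= 1/INR N) by (apply Rlt_le, Rdiv_lt_0_compat; lra). lra.
Qed.

Lemma sin_quarter x : 0 <= x -> x <= PI/2 -> x/4 <= sin x.
Proof.
  intros h0 h1. pose proof PI_4. pose proof PI_RGT_0.
  destruct (SIN x h0 ltac:(lra)) as [HS _].
  assert (sin_lb x = x - x^3/6 + x^5/120 - x^7/5040) by (unfold sin_lb, sin_approx, sin_term; simpl; field).
  assert (x <= 2) by lra.
  assert (x^2 <= 4) by nra.
  assert (0 <= x^4 * (1/120 - x^2/5040)) by (apply Rmult_le_pos; [apply pow_le; lra | lra]).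
  assert (x * (1 - x^2/6 + x^4 * (1/120 - x^2/5040)) >= x/4) by nra.
  assert (x - x^3/6 + x^5/120 - x^7/5040 = x * (1 - x^2/6 + x^4 * (1/120 - x^2/5040))) by field.
  lra.
Qed.

Lemma sin_th_lower N k : (2 <= N)%nat -> (1 <= k <= Z.of_nat N - 1)%Z ->
  PI/(4*INR N) * IZR k <= sin (th N k) \/ PI/(4*INR N) * IZR (Z.of_nat N - k) <= sin (th N k).
Proof.
  intros HN hk. pose proof (INR_pos2 N HN). pose proof PI_RGT_0.
  assert (E : INR N = IZR (Z.of_nat N)) by apply INR_IZR_INZ.
  destruct (Z_le_gt_dec (2*k) (Z.of_nat N)) as [h|h].
  - left. assert (2 * IZR k <= INR N) by (rewrite E, <- mult_IZR; apply IZR_le; lia).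
    assert (1 <= IZR k) by (apply IZR_le; lia).
    pose proof (sin_quarter (th N k)). unfold th in *.
    replace (PI / (4 * INR N) * IZR k) with (PI * IZR k / INR N / 4) by (field; lra).
    apply H3.
    + apply Rlt_le, Rdiv_lt_0_compat; nra.
    + apply (Rmult_le_reg_r (INR N)); auto. unfold Rdiv. rewrite Rmult_assoc, Rinv_l by lra. nra.
  - right. assert (2 * IZR (Z.of_nat N - k) <= INR N) by (rewrite E, <- mult_IZR; apply IZR_le; lia).
    assert (1 <= IZR (Z.of_nat N - k)) by (apply IZR_le; lia).
    assert (Hs : sin (th N k) = sin (th N (Z.of_nat N - k))).
    { rewrite <- sin_PI_x. f_equal. unfold th. rewrite minus_IZR, <- E. field. lra. }
    rewrite Hs.
    pose proof (sin_quarter (th N (Z.of_nat N - k))). unfold th in *.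
    replace (PI / (4 * INR N) * IZR (Z.of_nat N - k)) with (PI * IZR (Z.of_nat N - k) / INR N / 4) by (field; lra).
    apply H3.
    + apply Rlt_le, Rdiv_lt_0_compat; nra.
    + apply (Rmult_le_reg_r (INR N)); auto. unfold Rdiv. rewrite Rmult_assoc, Rinv_l by lra. nra.
Qed.

Lemma inv_sq_bound s3 s4 c p q : 0 < c -> 1 <= p -> 1 <= q -> c*p <= s3 -> c*q <= s4 ->
  1/(s3+s4)^2 <= 1/c^2 * (1/(p+q)^2).
Proof.
  intros hc hp hq h3 h4.
  assert (0 < c*(p+q)) by (apply Rmult_lt_0_compat; lra).
  replace (1/c^2 * (1/(p+q)^2)) with (1/(c*(p+q))^2) by (field; lra).
  unfold Rdiv. rewrite !Rmult_1_l. apply Rinv_le_contravar.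
  - apply pow_lt. lra.
  - apply pow_incr. lra.
Qed.

Definition fR (i : nat) := INR i + 1.
Definition gR (N i : nat) := INR N - INR i - 1.
Definition Q (N i3 i4 : nat) :=
  1/(fR i3 + fR i4)^2 + 1/(fR i3 + gR N i4)^2 + 1/(gR N i3 + fR i4)^2 + 1/(gR N i3 + gR N i4)^2.

Lemma IZR_kk i : IZR (Z.of_nat (S i)) = fR i.
Proof. rewrite <- INR_IZR_INZ, S_INR. reflexivity. Qed.

Lemma IZR_Nkk N i : IZR (Z.of_nat N - Z.of_nat (S i)) = gR N i.
Proof. rewrite minus_IZR, IZR_kk, <- INR_IZR_INZ. unfold fR, gR. ring. Qed.

Lemma fR_ge1 i : 1 <= fR i.
Proof. unfold fR. pose proof (pos_INR i). lra. Qed.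

Lemma gR_ge1 N i : (i <= N - 2)%nat -> (2 <= N)%nat -> 1 <= gR N i.
Proof.
  intros. unfold gR. assert (INR i <= INR N - 2).
  { replace 2 with (INR 2) by (simpl; ring). rewrite <- minus_INR by lia. apply le_INR. lia. }
  lra.
Qed.

Lemma Bd_bound N i3 i4 : (2 <= N)%nat -> (i3 <= N-2)%nat -> (i4 <= N-2)%nat ->
  1/(sin (th N (Z.of_nat (S i3))) + sin (th N (Z.of_nat (S i4))))^2 <=
  16 * INR N ^ 2 / PI^2 * Q N i3 i4.
Proof.
  intros HN h3 h4. pose proof (INR_pos2 N HN). pose proof PI_RGT_0.
  set (c := PI / (4 * INR N)).
  assert (hc : 0 < c) by (unfold c; apply Rdiv_lt_0_compat; lra).
  replace (16 * INR N ^ 2 / PI^2) with (1/c^2) by (unfold c; field; lra).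
  assert (b3 : (1 <= Z.of_nat (S i3) <= Z.of_nat N - 1)%Z) by lia.
  assert (b4 : (1 <= Z.of_nat (S i4) <= Z.of_nat N - 1)%Z) by lia.
  pose proof (fR_ge1 i3). pose proof (fR_ge1 i4). pose proof (gR_ge1 N i3 h3 HN). pose proof (gR_ge1 N i4 h4 HN).
  assert (q1 : 0 <= 1/(fR i3 + fR i4)^2) by (apply Rlt_le, Rdiv_lt_0_compat; [lra| apply pow_lt; lra]).
  assert (q2 : 0 <= 1/(fR i3 + gR N i4)^2) by (apply Rlt_le, Rdiv_lt_0_compat; [lra| apply pow_lt; lra]).
  assert (q3 : 0 <= 1/(gR N i3 + fR i4)^2) by (apply Rlt_le, Rdiv_lt_0_compat; [lra| apply pow_lt; lra]).
  assert (q4 : 0 <= 1/(gR N i3 + gR N i4)^2) by (apply Rlt_le, Rdiv_lt_0_compat; [lra| apply pow_lt; lra]).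
  assert (0 < 1/c^2) by (apply Rdiv_lt_0_compat; [lra| apply pow_lt; lra]).
  unfold Q.
  destruct (sin_th_lower N _ HN b3) as [s3|s3]; destruct (sin_th_lower N _ HN b4) as [s4|s4];
    try rewrite IZR_Nkk in s3; try rewrite IZR_Nkk in s4; try rewrite IZR_kk in s3; try rewrite IZR_kk in s4.
  - pose proof (inv_sq_bound _ _ _ _ _ hc H1 H2 s3 s4). nra.
  - pose proof (inv_sq_bound _ _ _ _ _ hc H1 H4 s3 s4). nra.
  - pose proof (inv_sq_bound _ _ _ _ _ hc H3 H2 s3 s4). nra.
  - pose proof (inv_sq_bound _ _ _ _ _ hc H3 H4 s3 s4). nra.
Qed.

Lemma sumQ N : (2 <= N)%nat ->
  sum_f_R0 (fun i3 => sum_f_R0 (fun i4 => Q N i3 i4) (N-2)) (N-2) <= 4 * (1 + ln (INR N)).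
Proof.
  intros HN. unfold Q.
  assert (E : forall (a b c d : nat -> nat -> R),
    sum_f_R0 (fun i3 => sum_f_R0 (fun i4 => a i3 i4 + b i3 i4 + c i3 i4 + d i3 i4) (N-2)) (N-2) =
    sum_f_R0 (fun i3 => sum_f_R0 (fun i4 => a i3 i4) (N-2)) (N-2) +
    sum_f_R0 (fun i3 => sum_f_R0 (fun i4 => b i3 i4) (N-2)) (N-2) +
    sum_f_R0 (fun i3 => sum_f_R0 (fun i4 => c i3 i4) (N-2)) (N-2) +
    sum_f_R0 (fun i3 => sum_f_R0 (fun i4 => d i3 i4) (N-2)) (N-2)).
  { intros. rewrite <- !sum_plus. apply sum_eq. intros. rewrite <- !sum_plus. reflexivity. }
  rewrite (E (fun i3 i4 => 1/(fR i3 + fR i4)^2) (fun i3 i4 => 1/(fR i3 + gR N i4)^2)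
             (fun i3 i4 => 1/(gR N i3 + fR i4)^2) (fun i3 i4 => 1/(gR N i3 + gR N i4)^2)).
  pose proof (outer_fwd N HN) as OF. pose proof (outer_bwd N HN) as OB.
  assert (A1 : sum_f_R0 (fun i3 => sum_f_R0 (fun i4 => 1/(fR i3 + fR i4)^2) (N-2)) (N-2) <= 1 + ln (INR N)).
  { eapply Rle_trans; [|exact OF]. apply sum_Rle. intros i _. apply inner_fwd. apply fR_ge1. }
  assert (A2 : sum_f_R0 (fun i3 => sum_f_R0 (fun i4 => 1/(fR i3 + gR N i4)^2) (N-2)) (N-2) <= 1 + ln (INR N)).
  { eapply Rle_trans; [|exact OF]. apply sum_Rle. intros i _. apply inner_bwd; auto. apply fR_ge1. }
  assert (A3 : sum_f_R0 (fun i3 => sum_f_R0 (fun i4 => 1/(gR N i3 + fR i4)^2) (N-2)) (N-2) <= 1 + ln (INR N)).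
  { eapply Rle_trans; [|exact OB]. apply sum_Rle. intros i hi. apply inner_fwd. apply gR_ge1; auto. }
  assert (A4 : sum_f_R0 (fun i3 => sum_f_R0 (fun i4 => 1/(gR N i3 + gR N i4)^2) (N-2)) (N-2) <= 1 + ln (INR N)).
  { eapply Rle_trans; [|exact OB]. apply sum_Rle. intros i hi. apply inner_bwd; auto. apply gR_ge1; auto. }
  lra.
Qed.

Theorem mainTheorem3 :
  forall kappa m : R, 0 < kappa -> 0 < m ->
  exists C : R, 0 < C /\
    forall (N : nat) (k1 : Z), (2 <= N)%nat ->
      (0 < k1)%Z -> (k1 < Z.of_nat N)%Z ->
      resonance_sum kappa m N k1 <= C * (INR N) ^ 2 * ln (INR N).
Proof.
  intros kappa m hk hm.
  set (K0 := (3/(4*kappa^2))^2 * (2*sqrt(kappa/m))^2 * 64).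
  assert (hK0 : 0 < K0).
  { unfold K0. pose proof (sqrt_lt_R0 (kappa/m) (Rdiv_lt_0_compat _ _ hk hm)).
    assert (0 < 3/(4*kappa^2)) by (apply Rdiv_lt_0_compat; [lra| apply Rmult_lt_0_compat; [lra| apply pow_lt; lra]]).
    apply Rmult_lt_0_compat; [apply Rmult_lt_0_compat|]; try lra; apply pow_lt; lra. }
  assert (hl2 : 0 < ln 2) by (rewrite <- ln_1; apply ln_increasing; lra).
  pose proof PI_RGT_0 as hpi.
  exists (K0 * 16 / PI^2 * 4 * (1/ln 2 + 1)). split.
  { assert (0 < 1/ln 2) by (apply Rdiv_lt_0_compat; lra).
    assert (0 < PI^2) by (apply pow_lt; lra).
    assert (0 < K0 * 16 / PI^2) by (apply Rdiv_lt_0_compat; lra). nra. }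
  intros N k1 HN hk1 hk1'.
  pose proof (INR_pos2 N HN) as hN.
  set (M := K0 * (16 * INR N ^ 2 / PI^2)).
  assert (Step1 : resonance_sum kappa m N k1 <=
    sum_f_R0 (fun i2 => sum_f_R0 (fun i3 => sum_f_R0 (fun i4 =>
      if Z.eqb ((k1 - Z.of_nat (S i2) + Z.of_nat (S i3) + Z.of_nat (S i4)) mod Z.of_nat N)%Z 0%Z
      then M * Q N i3 i4 else 0) (N-2)) (N-2)) (N-2)).
  { unfold resonance_sum. apply sum_Rle; intros i2 hi2; apply sum_Rle; intros i3 hi3; apply sum_Rle; intros i4 hi4.
    cbv zeta.
    destruct (Z.eqb _ 0%Z) eqn:E; [|lra].
    apply Z.eqb_eq in E.
    eapply Rle_trans; [apply term_bound; auto; lia|].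
    fold K0. pose proof (Bd_bound N i3 i4 HN hi3 hi4) as HB.
    unfold M. unfold Rdiv at 1. rewrite Rmult_assoc. apply Rmult_le_compat_l; [lra|].
    unfold Rdiv in HB. rewrite Rmult_1_l in HB. exact HB. }
  eapply Rle_trans; [exact Step1|].
  rewrite (sum_swap (fun i2 i3 => sum_f_R0 (fun i4 =>
      if Z.eqb ((k1 - Z.of_nat (S i2) + Z.of_nat (S i3) + Z.of_nat (S i4)) mod Z.of_nat N)%Z 0%Z
      then M * Q N i3 i4 else 0) (N-2))).
  assert (Step2 : forall i3, (i3 <= N-2)%nat ->
    sum_f_R0 (fun i2 => sum_f_R0 (fun i4 =>
      if Z.eqb ((k1 - Z.of_nat (S i2) + Z.of_nat (S i3) + Z.of_nat (S i4)) mod Z.of_nat N)%Z 0%Z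
      then M * Q N i3 i4 else 0) (N-2)) (N-2) <= sum_f_R0 (fun i4 => M * Q N i3 i4) (N-2)).
  { intros i3 hi3.
    rewrite (sum_swap (fun i2 i4 =>
      if Z.eqb ((k1 - Z.of_nat (S i2) + Z.of_nat (S i3) + Z.of_nat (S i4)) mod Z.of_nat N)%Z 0%Z
      then M * Q N i3 i4 else 0)).
    apply sum_Rle. intros i4 hi4.
    apply (sum_unique (fun i2 => Z.eqb ((k1 - Z.of_nat (S i2) + Z.of_nat (S i3) + Z.of_nat (S i4)) mod Z.of_nat N)%Z 0%Z)).
    - apply Rmult_le_pos; [unfold M; apply Rmult_le_pos; [lra|]; apply Rlt_le, Rdiv_lt_0_compat; [apply Rmult_lt_0_compat; [lra|apply pow_lt; lra]| apply pow_lt; lra]|].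
      unfold Q. pose proof (fR_ge1 i3). pose proof (fR_ge1 i4). pose proof (gR_ge1 N i3 hi3 HN). pose proof (gR_ge1 N i4 hi4 HN).
      assert (0 <= 1/(fR i3 + fR i4)^2) by (apply Rlt_le, Rdiv_lt_0_compat; [lra| apply pow_lt; lra]).
      assert (0 <= 1/(fR i3 + gR N i4)^2) by (apply Rlt_le, Rdiv_lt_0_compat; [lra| apply pow_lt; lra]).
      assert (0 <= 1/(gR N i3 + fR i4)^2) by (apply Rlt_le, Rdiv_lt_0_compat; [lra| apply pow_lt; lra]).
      assert (0 <= 1/(gR N i3 + gR N i4)^2) by (apply Rlt_le, Rdiv_lt_0_compat; [lra| apply pow_lt; lra]).
      lra.
    - intros i j hi hj Ei Ej. apply Z.eqb_eq in Ei. apply Z.eqb_eq in Ej.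
      assert (HNz : (Z.of_nat N <> 0)%Z) by lia.
      pose proof (Z_div_mod_eq_full (k1 - Z.of_nat (S i) + Z.of_nat (S i3) + Z.of_nat (S i4)) (Z.of_nat N)) as E1.
      pose proof (Z_div_mod_eq_full (k1 - Z.of_nat (S j) + Z.of_nat (S i3) + Z.of_nat (S i4)) (Z.of_nat N)) as E2.
      rewrite Ei in E1. rewrite Ej in E2.
      set (q1 := ((k1 - Z.of_nat (S i) + Z.of_nat (S i3) + Z.of_nat (S i4)) / Z.of_nat N)%Z) in *.
      set (q2 := ((k1 - Z.of_nat (S j) + Z.of_nat (S i3) + Z.of_nat (S i4)) / Z.of_nat N)%Z) in *.
      assert (Z.of_nat j - Z.of_nat i = Z.of_nat N * (q1 - q2))%Z by lia.
      assert (Hi : (0 <= Z.of_nat i <= Z.of_nat N - 2)%Z) by lia.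
      assert (Hj : (0 <= Z.of_nat j <= Z.of_nat N - 2)%Z) by lia.
      assert (hN2 : (2 <= Z.of_nat N)%Z) by lia.
      set (d := (q1 - q2)%Z) in *. clearbody d.
      assert (d = 0%Z).
      { destruct (Z_lt_le_dec d 0); [|destruct (Z_lt_le_dec 0 d)]; nia. }
      subst d. lia. }
  eapply Rle_trans; [apply sum_Rle; exact Step2|].
  assert (E : sum_f_R0 (fun i3 => sum_f_R0 (fun i4 => M * Q N i3 i4) (N-2)) (N-2) =
              M * sum_f_R0 (fun i3 => sum_f_R0 (fun i4 => Q N i3 i4) (N-2)) (N-2)).
  { rewrite scal_sum. apply sum_eq. intros i _. rewrite Rmult_comm, scal_sum. apply sum_eq. intros. ring. }
  rewrite E. pose proof (sumQ N HN) as SQ.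
  assert (hM : 0 < M).
  { unfold M. apply Rmult_lt_0_compat; [lra|]. apply Rdiv_lt_0_compat; [apply Rmult_lt_0_compat; [lra|apply pow_lt; lra]| apply pow_lt; lra]. }
  assert (hlN : ln 2 <= ln (INR N)).
  { assert (2 <= INR N) by (apply (le_INR 2); lia).
    destruct (Req_dec (INR N) 2) as [e|e]; [rewrite e; lra|]. left. apply ln_increasing; lra. }
  assert (H1 : 1 + ln (INR N) <= (1/ln 2 + 1) * ln (INR N)).
  { assert (1 <= ln (INR N) / ln 2) by (apply (Rmult_le_reg_r (ln 2)); [lra|]; unfold Rdiv; rewrite Rmult_assoc, Rinv_l; lra).
    replace ((1/ln 2 + 1) * ln (INR N)) with (ln (INR N) / ln 2 + ln (INR N)) by (field; lra). lra. }
  assert (M * sum_f_R0 (fun i3 => sum_f_R0 (fun i4 => Q N i3 i4) (N-2)) (N-2) <= M * (4 * ((1/ln 2 + 1) * ln (INR N)))).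
  { apply Rmult_le_compat_l; lra. }
  eapply Rle_trans; [exact H|]. unfold M. right. field. lra.
Qed.
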